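(* Let $N\ge1$, $c>0$, and $\mathbf w=(f_0,\alpha,f_2,\dots,f_N)^T$ with $\alpha\in(-1,1)$ and $f_0\ne0$. Then every eigenvalue of $c\,\tilde{\mathbf D}(\mathbf w)^{-1}\tilde{\mathbf M}(\mathbf w)\tilde{\mathbf D}(\mathbf w)$ (i.e. every characteristic speed of the system $\frac1c\tilde{\mathbf D}\partial_t\mathbf w+\tilde{\mathbf M}\tilde{\mathbf D}\partial_z\mathbf w=\tilde{\mathbf S}$) lies in $[-c,c]$.
   Context: For a parameter $\alpha\in(-1,1)$ define on $[-1,1]$ the weights $\omega(\mu)=(1+\alpha\mu)^{-4}$ and $\tilde\omega(\mu)=(1+\alpha\mu)^{-5}$. Let $\{\phi_k\}_{k\ge0}$ (resp. $\{\tilde\phi_k\}_{k\ge0}$) be the monic orthogonal polynomials on $[-1,1]$ with respect to $\omega$ (resp. $\tilde\omega$); their coefficients depend smoothly on $\alpha$. Set $K_{j,k}=\int_{-1}^1\mu^j\phi_k\,\omega\,d\mu$, $\tilde K_{j,k}=\int_{-1}^1\mu^j\tilde\phi_k\,\tilde\omega\,d\mu$, $\beta_k=K_{k,k}/\tilde K_{k,k}$, $\gamma_k=\tilde K_{k,k}^{-1}\,\partial K_{k,k}/\partial\alpha$. Given $\mathbf w=(f_0,\alpha,f_2,\dots,f_N)^T$, set $f_1:=0$. The $(N+1)\times(N+1)$ matrix $\tilde{\mathbf D}=\tilde{\mathbf D}(\mathbf w)$ (rows/columns indexed $0,\dots,N$) has entries $\tilde D_{0,0}=\beta_0$, $\tilde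 D_{0,1}=\gamma_0f_0$, $\tilde D_{1,0}=\alpha$, $\tilde D_{1,1}=-4f_0$; for $2\le i\le N$: $\tilde D_{i,1}=\gamma_if_i-4f_{i-1}$, $\tilde D_{i,i}=\beta_i$, and $\tilde D_{i,i-1}=\alpha$ when $i\ge3$; all other entries are $0$. Let $\tilde{\boldsymbol\Lambda}=\mathrm{diag}(\tilde K_{0,0},\dots,\tilde K_{N,N})$ and $\tilde{\mathbf M}=\tilde{\boldsymbol\Lambda}^{-1}\mathbf G$ where $G_{i,j}=\int_{-1}^1\mu\,\tilde\phi_i\tilde\phi_j\,\tilde\omega\,d\mu$, $0\le i,j\le N$. *)

(* Defs.v *)
From Stdlib Require Import Reals ClassicalEpsilon.
Open Scope R_scope.

(** Riemann integral of f over [a,b] (the common value of RiemannInt over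
    all integrability proofs; arbitrary if f is not integrable). *)
Definition integral (f : R -> R) (a b : R) : R :=
  epsilon (inhabits 0)
    (fun I => exists pr : Riemann_integrable f a b, RiemannInt pr = I).

(** Derivative of f at x (arbitrary if f is not differentiable at x). *)
Definition dderiv (f : R -> R) (x : R) : R :=
  epsilon (inhabits 0) (fun l => derivable_pt_lim f x l).

Fixpoint rsum (f : nat -> R) (n : nat) : R :=
  match n with O => 0 | S m => rsum f m + f m end.

Definition monic_poly (a : nat -> R) (k : nat) (x : R) : R :=
  x ^ k + rsum (fun i => a i * x ^ i) k.

Definition is_monic_orth (w : R -> R) (k : nat) (a : nat -> R) : Prop :=
  forall j : nat, (j < k)%nat ->
    integral (fun x => x ^ j * monic_poly a k x * w x) (-1) 1 = 0.

Definition orth_poly (w : R -> R) (k : nat) : R -> R :=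
  monic_poly (epsilon (inhabits (fun _ => 0)) (is_monic_orth w k)) k.

Definition omega (alpha x : R) : R := / (1 + alpha * x) ^ 4.
Definition omegat (alpha x : R) : R := / (1 + alpha * x) ^ 5.

Definition phi (alpha : R) (k : nat) : R -> R := orth_poly (omega alpha) k.
Definition phit (alpha : R) (k : nat) : R -> R := orth_poly (omegat alpha) k.

Definition Kc (alpha : R) (j k : nat) : R :=
  integral (fun x => x ^ j * phi alpha k x * omega alpha x) (-1) 1.
Definition Kt (alpha : R) (j k : nat) : R :=
  integral (fun x => x ^ j * phit alpha k x * omegat alpha x) (-1) 1.

Definition beta (alpha : R) (k : nat) : R := Kc alpha k k / Kt alpha k k.
Definition gamma (alpha : R) (k : nat) : R :=
  / Kt alpha k k * dderiv (fun a => Kc a k k) alpha.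

(** Components f_i of w, with the convention f_1 := 0. *)
Definition fw (f : nat -> R) (i : nat) : R :=
  if Nat.eqb i 1 then 0 else f i.

(** The matrix D~(w) (entries for 0 <= i,j <= N are relevant). *)
Definition Dt (alpha : R) (f : nat -> R) (i j : nat) : R :=
  let g := fw f in
  if Nat.eqb i 0 then
    (if Nat.eqb j 0 then beta alpha 0
     else if Nat.eqb j 1 then gamma alpha 0 * g 0%nat else 0)
  else if Nat.eqb i 1 then
    (if Nat.eqb j 0 then alpha
     else if Nat.eqb j 1 then -4 * g 0%nat else 0)
  else if Nat.eqb j 1 then gamma alpha i * g i - 4 * g (i - 1)%nat
  else if Nat.eqb j i then beta alpha i
  else if andb (Nat.leb 3 i) (Nat.eqb j (i - 1)) then alpha
  else 0.

Definition Gm (alpha : R) (i j : nat) : R :=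
  integral (fun x => x * phit alpha i x * phit alpha j x * omegat alpha x) (-1) 1.

(** M~ = Lambda~^{-1} G. *)
Definition Mt (alpha : R) (i j : nat) : R := Gm alpha i j / Kt alpha i i.

(** n x n matrices as functions nat -> nat -> R (indices 0..n-1). *)
Definition mmul (n : nat) (A B : nat -> nat -> R) (i j : nat) : R :=
  rsum (fun k => A i k * B k j) n.

Definition idm (i j : nat) : R := if Nat.eqb i j then 1 else 0.

Definition is_inverse (n : nat) (A B : nat -> nat -> R) : Prop :=
  forall i j, (i < n)%nat -> (j < n)%nat ->
    mmul n A B i j = idm i j /\ mmul n B A i j = idm i j.

Definition minv (n : nat) (A : nat -> nat -> R) : nat -> nat -> R :=
  epsilon (inhabits (fun _ _ => 0)) (is_inverse n A).

Definition mvec (n : nat) (A : nat -> nat -> R) (v : nat -> R) (i : nat) : R :=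
  rsum (fun k => A i k * v k) n.

(** a + i b is a (complex) eigenvalue of the real n x n matrix A:
    there is a nonzero complex vector u + i v with A (u + i v) = (a + i b)(u + i v). *)
Definition is_eigenvalue (n : nat) (A : nat -> nat -> R) (a b : R) : Prop :=
  exists u v : nat -> R,
    (exists i, (i < n)%nat /\ (u i <> 0 \/ v i <> 0)) /\
    forall i, (i < n)%nat ->
      mvec n A u i = a * u i - b * v i /\ mvec n A v i = b * u i + a * v i.

Definition charmat (N : nat) (c alpha : R) (f : nat -> R) (i j : nat) : R :=
  c * mmul (S N) (minv (S N) (Dt alpha f)) (mmul (S N) (Mt alpha) (Dt alpha f)) i j.

(* Main.v *)
Require Import Defs.
From Stdlib Require Import Reals ClassicalEpsilon Lia Lra.
From Coquelicot Require Import Coquelicot.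
From mathcomp Require all_boot all_algebra Rstruct.
Open Scope R_scope.

Lemma rsum_ext f g n : (forall i, (i < n)%nat -> f i = g i) -> rsum f n = rsum g n.
Proof. induction n; simpl; intros H; auto. rewrite IHn by (intros; apply H; lia). rewrite H by lia; auto. Qed.

Lemma rsum_plus f g n : rsum (fun i => f i + g i) n = rsum f n + rsum g n.
Proof. induction n; simpl; [ring|rewrite IHn; ring]. Qed.

Lemma rsum_scal c f n : rsum (fun i => c * f i) n = c * rsum f n.
Proof. induction n; simpl; [ring|rewrite IHn; ring]. Qed.

Lemma rsum_zero f n : (forall i, (i < n)%nat -> f i = 0) -> rsum f n = 0.
Proof. induction n; simpl; intros H; auto. rewrite IHn by (intros; apply H; lia). rewrite H by lia; ring. Qed.

Lemma rsum_shift f n : rsum f (S n) = f 0%nat + rsum (fun i => f (S i)) n.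
Proof. induction n; simpl in *; [ring|]. rewrite IHn. ring. Qed.

Lemma rsum_single f n k : (k < n)%nat -> (forall i, (i < n)%nat -> i <> k -> f i = 0) -> rsum f n = f k.
Proof.
  induction n; intros Hk H; [lia|]. simpl.
  destruct (Nat.eq_dec k n) as [->|Hne].
  - rewrite rsum_zero; [ring|]. intros; apply H; lia.
  - rewrite IHn by (try lia; intros; apply H; lia). rewrite (H n) by lia; ring.
Qed.

Lemma rsum_exchange (F : nat -> nat -> R) n m :
  rsum (fun i => rsum (fun j => F i j) m) n = rsum (fun j => rsum (fun i => F i j) n) m.
Proof.
  induction n; simpl.
  - rewrite rsum_zero; auto.
  - rewrite IHn. rewrite <- rsum_plus. reflexivity.
Qed.

Lemma rsum_ge0 f n : (forall i, (i < n)%nat -> 0 <= f i) -> 0 <= rsum f n.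
Proof. induction n; simpl; intros H; [lra|]. assert (0 <= rsum f n) by (apply IHn; intros; apply H; lia).
  assert (0 <= f n) by (apply H; lia). lra. Qed.

Lemma rsum_pos f n k : (k < n)%nat -> (forall i, (i < n)%nat -> 0 <= f i) -> 0 < f k -> 0 < rsum f n.
Proof.
  induction n; intros Hk H Hp; [lia|]. simpl.
  destruct (Nat.eq_dec k n) as [->|Hne].
  - assert (0 <= rsum f n) by (apply rsum_ge0; intros; apply H; lia). lra.
  - assert (0 < rsum f n). { apply IHn; auto; try lia. }
    assert (0 <= f n) by (apply H; lia). lra.
Qed.

Lemma rsum_le f g n : (forall i, (i < n)%nat -> f i <= g i) -> rsum f n <= rsum g n.
Proof. induction n; simpl; intros H; [lra|]. assert (rsum f n <= rsum g n) by (apply IHn; intros; apply H; lia).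
  assert (f n <= g n) by (apply H; lia). lra. Qed.

Definition Cont (f : R -> R) := forall x, -1 <= x <= 1 -> continuous f x.

Lemma Cont_const c : Cont (fun _ => c).
Proof. intros x _; apply continuous_const. Qed.
Lemma Cont_id : Cont (fun x => x).
Proof. intros x _; apply continuous_id. Qed.
Lemma Cont_plus f g : Cont f -> Cont g -> Cont (fun x => f x + g x).
Proof. intros Hf Hg x Hx; apply (continuous_plus f g); auto. Qed.
Lemma Cont_mult f g : Cont f -> Cont g -> Cont (fun x => f x * g x).
Proof. intros Hf Hg x Hx; apply (continuous_mult f g); auto. Qed.
Lemma Cont_pow k : Cont (fun x => x ^ k).
Proof. induction k; simpl. apply Cont_const. apply Cont_mult; auto. apply Cont_id. Qed.
Lemma Cont_rsum (F : nat -> R -> R) n : (forall i, (i < n)%nat -> Cont (F i)) -> Cont (fun x => rsum (fun i => F i x) n).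
Proof. induction n; simpl; intros H. apply Cont_const. apply Cont_plus. apply IHn; intros; apply H; lia. apply H; lia. Qed.
Lemma Cont_monic a k : Cont (monic_poly a k).
Proof. unfold monic_poly. apply Cont_plus. apply Cont_pow. apply (Cont_rsum (fun i x => a i * x ^ i)).
  intros; apply Cont_mult. apply Cont_const. apply Cont_pow. Qed.
Lemma Cont_ext f g : (forall x, f x = g x) -> Cont f -> Cont g.
Proof. intros E H x Hx. apply (continuous_ext f); auto. Qed.

Lemma pos1 a x : -1 < a < 1 -> -1 <= x <= 1 -> 0 < 1 + a*x.
Proof. intros. assert (Rabs (a*x) < 1). rewrite Rabs_mult.
assert (Rabs a < 1) by (apply Rabs_def1; lra). assert (Rabs x <= 1) by (apply Rabs_le; lra).
pose proof (Rabs_pos a). pose proof (Rabs_pos x). nra.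
apply Rabs_def2 in H1. lra. Qed.

Lemma cont_pow_all k y : continuous (fun y => y ^ k) y.
Proof. induction k; simpl. apply continuous_const. apply (continuous_mult (fun y => y) (fun y => y ^ k)); auto. apply continuous_id. Qed.

Lemma Cont_omega alpha : -1 < alpha < 1 -> Cont (omega alpha).
Proof. intros Ha x Hx. unfold omega. apply continuous_Rinv_comp.
  2:{ apply pow_nonzero. apply Rgt_not_eq. apply pos1; auto. }
  apply (continuous_comp (fun x => 1 + alpha * x) (fun y => y ^ 4)).
  apply (continuous_plus (fun _ => 1) (fun x => alpha * x)). apply continuous_const.
  apply (continuous_mult (fun _ => alpha) (fun x => x)). apply continuous_const. apply continuous_id.
  apply cont_pow_all.
Qed.
Lemma Cont_omegat alpha : -1 < alpha < 1 -> Cont (omegat alpha).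
Proof. intros Ha x Hx. unfold omegat. apply continuous_Rinv_comp.
  2:{ apply pow_nonzero. apply Rgt_not_eq. apply pos1; auto. }
  apply (continuous_comp (fun x => 1 + alpha * x) (fun y => y ^ 5)).
  apply (continuous_plus (fun _ => 1) (fun x => alpha * x)). apply continuous_const.
  apply (continuous_mult (fun _ => alpha) (fun x => x)). apply continuous_const. apply continuous_id.
  apply cont_pow_all.
Qed.

Definition I1 (f : R -> R) : R := RInt f (-1) 1.

Lemma Cont_ex f : Cont f -> ex_RInt f (-1) 1.
Proof. intros H. apply (ex_RInt_continuous (V:=R_CompleteNormedModule)). intros z Hz. apply H.
  rewrite Rmin_left, Rmax_right in Hz by lra. auto. Qed.

Lemma integral_I1 f : Cont f -> integral f (-1) 1 = I1 f.
Proof. intros H. unfold integral.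
  assert (Hr : exists I, exists pr : Riemann_integrable f (-1) 1, RiemannInt pr = I).
  { exists (RiemannInt (ex_RInt_Reals_0 _ _ _ (Cont_ex f H))). eexists; reflexivity. }
  pose proof (epsilon_spec (inhabits 0) _ Hr) as [pr E].
  rewrite <- E. unfold I1. rewrite (RInt_Reals f (-1) 1 pr). reflexivity. Qed.

Lemma I1_plus f g : Cont f -> Cont g -> I1 (fun x => f x + g x) = I1 f + I1 g.
Proof. intros; unfold I1. apply (RInt_plus f g); apply Cont_ex; auto. Qed.
Lemma I1_scal c f : Cont f -> I1 (fun x => c * f x) = c * I1 f.
Proof. intros; unfold I1. apply (RInt_scal f); apply Cont_ex; auto. Qed.
Lemma I1_ext f g : (forall x, f x = g x) -> I1 f = I1 g.
Proof. intros; unfold I1; apply RInt_ext; auto. Qed.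
Lemma I1_rsum (F : nat -> R -> R) n : (forall i, (i < n)%nat -> Cont (F i)) ->
  I1 (fun x => rsum (fun i => F i x) n) = rsum (fun i => I1 (F i)) n.
Proof. induction n; simpl; intros H.
  - unfold I1. rewrite RInt_const. unfold scal; simpl. unfold mult; simpl. ring.
  - rewrite (I1_plus (fun x => rsum (fun i => F i x) n) (F n)). rewrite IHn. auto.
    intros; apply H; lia. apply Cont_rsum; intros; apply H; lia. apply H; lia.
Qed.
Lemma I1_le f g : Cont f -> Cont g -> (forall x, -1 <= x <= 1 -> f x <= g x) -> I1 f <= I1 g.
Proof. intros; unfold I1; apply RInt_le; try lra; try apply Cont_ex; auto. intros; apply H1; lra. Qed.
Lemma I1_opp f : Cont f -> I1 (fun x => - f x) = - I1 f.
Proof. intros. replace (- I1 f) with ((-1) * I1 f) by ring. rewrite <- I1_scal; auto. apply I1_ext; intros; ring. Qed.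


Lemma pos_point g x0 : Cont g -> (forall x, -1 <= x <= 1 -> 0 <= g x) -> -1 < x0 < 1 -> 0 < g x0 -> 0 < I1 g.
Proof.
  intros Hc Hnn Hx0 Hp.
  assert (Hl : locally x0 (fun x => 0 < g x)).
  { apply (Hc x0 ltac:(lra) (fun y => 0 < y)). apply open_gt. exact Hp. }
  destruct Hl as [eps He].
  set (d := Rmin (eps/2) (Rmin ((1-x0)/2) ((x0+1)/2))).
  assert (Hd0 : 0 < d). { unfold d. pose proof (cond_pos eps). repeat apply Rmin_pos; lra. }
  assert (Hd1 : d <= eps/2) by apply Rmin_l.
  assert (Hd2 : d <= (1-x0)/2) by (eapply Rle_trans; [apply Rmin_r|apply Rmin_l]).
  assert (Hd3 : d <= (x0+1)/2) by (eapply Rle_trans; [apply Rmin_r|apply Rmin_r]).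
  assert (Hsub : forall a b, -1 <= a <= b -> b <= 1 -> ex_RInt g a b).
  { intros a b Hab Hb. apply (ex_RInt_continuous (V:=R_CompleteNormedModule)). intros z Hz.
    rewrite Rmin_left, Rmax_right in Hz by lra. apply Hc. lra. }
  unfold I1.
  rewrite <- (RInt_Chasles g (-1) (x0 - d) 1) by (apply Hsub; lra).
  rewrite <- (RInt_Chasles g (x0 - d) (x0 + d) 1) by (apply Hsub; lra).
  assert (H1 : 0 <= RInt g (-1) (x0 - d)).
  { apply RInt_ge_0; [lra| apply Hsub; lra |]. intros; apply Hnn; lra. }
  assert (H3 : 0 <= RInt g (x0 + d) 1).
  { apply RInt_ge_0; [lra| apply Hsub; lra |]. intros; apply Hnn; lra. }
  assert (H2 : 0 < RInt g (x0 - d) (x0 + d)).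
  { apply RInt_gt_0; [lra| |].
    - intros x Hx. apply He. change (Rabs (x - x0) < eps). apply Rabs_def1; lra.
    - intros x Hx. apply Hc. lra. }
  change (0 < RInt g (-1) (x0 - d) + (RInt g (x0 - d) (x0 + d) + RInt g (x0 + d) 1)). lra.
Qed.

Lemma pow_bound1 x i : 0 <= x <= 1 -> 0 <= x ^ i <= 1.
Proof. intros H. induction i; simpl; [lra|]. nra. Qed.

Lemma poly_bound (c : nat -> R) x n : 0 <= x <= 1 -> Rabs (rsum (fun i => c i * x ^ i) n) <= rsum (fun i => Rabs (c i)) n.
Proof.
  intros Hx. induction n; simpl.
  - rewrite Rabs_R0; lra.
  - eapply Rle_trans; [apply Rabs_triang|]. apply Rplus_le_compat; auto.
    rewrite Rabs_mult. pose proof (pow_bound1 x n Hx). rewrite (Rabs_right (x^n)) by lra.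
    pose proof (Rabs_pos (c n)). nra.
Qed.

Lemma poly_nz k : forall (b : nat -> R), b k <> 0 -> forall eps, 0 < eps <= 1 ->
  exists x, 0 < x < eps /\ rsum (fun i => b i * x ^ i) (S k) <> 0.
Proof.
  induction k; intros b Hb eps He.
  - exists (eps/2). split; [lra|]. simpl. rewrite Rplus_0_l, Rmult_1_r. auto.
  - assert (Hsh : forall x, rsum (fun i => b i * x ^ i) (S (S k)) = b 0%nat + x * rsum (fun i => b (S i) * x ^ i) (S k)).
    { intros x. rewrite rsum_shift. simpl pow at 1. rewrite Rmult_1_r. f_equal.
      rewrite <- rsum_scal. apply rsum_ext. intros; simpl; ring. }
    destruct (Req_dec (b 0%nat) 0) as [Hb0|Hb0].
    + destruct (IHk (fun i => b (S i)) Hb eps He) as [x [Hx Hne]].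
      exists x; split; auto. rewrite Hsh, Hb0. intro HH. apply Hne.
      assert (x * rsum (fun i => b (S i) * x ^ i) (S k) = 0) by lra.
      apply Rmult_integral in H. destruct H; [lra|auto].
    + set (S0 := rsum (fun i => Rabs (b (S i))) (S k)).
      assert (HS0 : 0 <= S0) by (apply rsum_ge0; intros; apply Rabs_pos).
      pose proof (Rabs_pos_lt _ Hb0) as Hab.
      set (x := Rmin (eps/2) (Rabs (b 0%nat) / (2 * (S0 + 1)))).
      assert (Hx0 : 0 < x). { unfold x. apply Rmin_pos; [lra|]. apply Rdiv_lt_0_compat; lra. }
      assert (Hx1 : x <= eps/2) by apply Rmin_l.
      assert (Hx2 : x <= Rabs (b 0%nat) / (2 * (S0 + 1))) by apply Rmin_r.
      exists x. split; [lra|]. rewrite Hsh.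
      pose proof (poly_bound (fun i => b (S i)) x (S k) ltac:(lra)) as Hbd. cbv beta in Hbd. fold S0 in Hbd.
      assert (HxS : x * S0 < Rabs (b 0%nat)).
      { apply Rle_lt_trans with (Rabs (b 0%nat) / (2 * (S0 + 1)) * S0). apply Rmult_le_compat_r; lra.
        replace (Rabs (b 0%nat) / (2 * (S0 + 1)) * S0) with (Rabs (b 0%nat) * (S0 / (2 * (S0 + 1)))) by (field; lra).
        assert (S0 / (2 * (S0 + 1)) < 1).
        { apply (Rmult_lt_reg_r (2*(S0+1))); [lra|]. unfold Rdiv. rewrite Rmult_assoc, Rinv_l by lra. lra. }
        rewrite <- (Rmult_1_r (Rabs (b 0%nat))) at 2. apply Rmult_lt_compat_l; auto. }
      intro HH. 
      assert (Rabs (b 0%nat) = Rabs (x * rsum (fun i => b (S i) * x ^ i) (S k))).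
      { replace (b 0%nat) with (- (x * rsum (fun i => b (S i) * x ^ i) (S k))) by lra. apply Rabs_Ropp. }
      rewrite Rabs_mult, (Rabs_right x) in H by lra.
      assert (x * Rabs (rsum (fun i => b (S i) * x ^ i) (S k)) <= x * S0) by (apply Rmult_le_compat_l; lra).
      lra.
Qed.


Definition mc (a : nat -> R) (k i : nat) : R :=
  if Nat.ltb i k then a i else if Nat.eqb i k then 1 else 0.

Lemma mp_rsum a k n x : (k < n)%nat -> monic_poly a k x = rsum (fun i => mc a k i * x ^ i) n.
Proof.
  induction n; intros H; [lia|]. simpl.
  destruct (Nat.eq_dec k n) as [->|Hne].
  - unfold monic_poly, mc. rewrite Nat.ltb_irrefl, Nat.eqb_refl. rewrite Rplus_comm. f_equal; [|ring].
    apply rsum_ext. intros i Hi. apply Nat.ltb_lt in Hi. rewrite Hi. auto.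
  - rewrite IHn by lia. unfold mc. replace (Nat.ltb n k) with false by (symmetry; apply Nat.ltb_ge; lia).
    replace (Nat.eqb n k) with false by (symmetry; apply Nat.eqb_neq; lia). ring.
Qed.

Definition ip (w g h : R -> R) := I1 (fun x => g x * h x * w x).

Lemma rsum_mult_r f n c : rsum f n * c = rsum (fun i => f i * c) n.
Proof. induction n; simpl; [ring|rewrite <- IHn; ring]. Qed.

Lemma I1_minus f g : Cont f -> Cont g -> I1 (fun x => f x - g x) = I1 f - I1 g.
Proof. intros. unfold Rminus. rewrite (I1_plus f (fun x => - g x)); auto. rewrite I1_opp; auto.
  intros x Hx. apply (continuous_opp g); auto. Qed.

Lemma Cont_opp g : Cont g -> Cont (fun x => - g x).
Proof. intros H x Hx. apply (continuous_opp g); auto. Qed.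

Lemma orth_lin w a k n b : Cont w -> is_monic_orth w k a -> (n <= k)%nat ->
  I1 (fun x => rsum (fun j => b j * x ^ j) n * monic_poly a k x * w x) = 0.
Proof.
  intros Hw Ho Hn.
  rewrite (I1_ext _ (fun x => rsum (fun j => b j * (x ^ j * monic_poly a k x * w x)) n)).
  2:{ intros x. rewrite Rmult_assoc, rsum_mult_r. apply rsum_ext. intros; ring. }
  rewrite (I1_rsum (fun j x => b j * (x ^ j * monic_poly a k x * w x))).
  - apply rsum_zero. intros j Hj. rewrite I1_scal.
    + rewrite <- integral_I1. rewrite Ho by lia. ring.
      apply Cont_mult; [apply Cont_mult|]; auto using Cont_pow, Cont_monic.
    + apply Cont_mult; [apply Cont_mult|]; auto using Cont_pow, Cont_monic.
  - intros j Hj. apply Cont_mult. apply Cont_const. apply Cont_mult; [apply Cont_mult|]; auto using Cont_pow, Cont_monic.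
Qed.

Lemma norm_pos w a k : Cont w -> (forall x, -1 <= x <= 1 -> 0 < w x) ->
  0 < ip w (monic_poly a k) (monic_poly a k).
Proof.
  intros Hw Hp.
  assert (Hk : mc a k k <> 0). { unfold mc. rewrite Nat.ltb_irrefl, Nat.eqb_refl. lra. }
  destruct (poly_nz k (mc a k) Hk 1 ltac:(lra)) as [x0 [Hx0 Hne]].
  rewrite <- mp_rsum in Hne by lia.
  unfold ip. apply (pos_point _ x0).
  - apply Cont_mult; [apply Cont_mult|]; auto using Cont_monic.
  - intros x Hx. pose proof (Hp x Hx). pose proof (Rle_0_sqr (monic_poly a k x)). unfold Rsqr in *. nra.
  - lra.
  - pose proof (Hp x0 ltac:(lra)). assert (0 < monic_poly a k x0 * monic_poly a k x0).
    { pose proof (Rsqr_pos_lt _ Hne). unfold Rsqr in *. lra. } nra.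
Qed.

Lemma diag_eq w a k : Cont w -> is_monic_orth w k a ->
  integral (fun x => x ^ k * monic_poly a k x * w x) (-1) 1 = ip w (monic_poly a k) (monic_poly a k).
Proof.
  intros Hw Ho. rewrite integral_I1 by (apply Cont_mult; [apply Cont_mult|]; auto using Cont_pow, Cont_monic).
  unfold ip.
  rewrite (I1_ext (fun x => monic_poly a k x * monic_poly a k x * w x)
    (fun x => x ^ k * monic_poly a k x * w x + rsum (fun j => a j * x ^ j) k * monic_poly a k x * w x)).
  2:{ intros x. unfold monic_poly at 1. ring. }
  rewrite I1_plus.
  - rewrite orth_lin; auto. ring.
  - apply Cont_mult; [apply Cont_mult|]; auto using Cont_pow, Cont_monic.
  - apply Cont_mult; [apply Cont_mult|]; auto using Cont_pow, Cont_monic.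
    apply (Cont_rsum (fun j x => a j * x ^ j)). intros; apply Cont_mult; auto using Cont_const, Cont_pow.
Qed.

Lemma cross w a i a' j : Cont w -> is_monic_orth w j a' -> (i < j)%nat ->
  ip w (monic_poly a i) (monic_poly a' j) = 0.
Proof.
  intros Hw Ho Hij. unfold ip.
  rewrite (I1_ext _ (fun x => rsum (fun l => mc a i l * x ^ l) (S i) * monic_poly a' j x * w x)).
  2:{ intros x. rewrite (mp_rsum a i (S i)) by lia. auto. }
  apply orth_lin; auto.
Qed.

Lemma ip_sym w g h : ip w g h = ip w h g.
Proof. unfold ip. apply I1_ext. intros; ring. Qed.

Lemma span w k (A : nat -> nat -> R) h : Cont w -> Cont h ->
  (forall m, (m <= k)%nat -> ip w (monic_poly (A m) m) h = 0) ->
  forall j, (j <= k)%nat -> I1 (fun x => x ^ j * h x * w x) = 0.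
Proof.
  intros Hw Hh Hm j.
  induction j as [j IH] using (well_founded_induction Wf_nat.lt_wf). intros Hj.
  rewrite (I1_ext _ (fun x => monic_poly (A j) j x * h x * w x - rsum (fun i => A j i * (x ^ i * h x * w x)) j)).
  2:{ intros x. replace (rsum (fun i : nat => A j i * (x ^ i * h x * w x)) j) with (rsum (fun i : nat => A j i * x ^ i) j * (h x * w x)).
      unfold monic_poly. ring. rewrite rsum_mult_r. apply rsum_ext; intros; ring. }
  rewrite I1_minus.
  - rewrite (I1_rsum (fun i x => A j i * (x ^ i * h x * w x))).
    + rewrite rsum_zero. change (ip w (monic_poly (A j) j) h - 0 = 0). rewrite Hm; auto. ring.
      intros i Hi. rewrite I1_scal. rewrite IH; auto; try lia. ring.
      apply Cont_mult; [apply Cont_mult|]; auto using Cont_pow.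
    + intros i Hi. apply Cont_mult; auto using Cont_const. apply Cont_mult; [apply Cont_mult|]; auto using Cont_pow.
  - apply Cont_mult; [apply Cont_mult|]; auto using Cont_monic.
  - apply (Cont_rsum (fun i x => A j i * (x ^ i * h x * w x))). intros i Hi.
    apply Cont_mult; auto using Cont_const. apply Cont_mult; [apply Cont_mult|]; auto using Cont_pow.
Qed.

Lemma gs_step w k (A : nat -> nat -> R) : Cont w -> (forall x, -1 <= x <= 1 -> 0 < w x) ->
  (forall m, (m <= k)%nat -> is_monic_orth w m (A m)) -> exists a, is_monic_orth w (S k) a.
Proof.
  intros Hw Hp HA.
  set (P := fun m => monic_poly (A m) m).
  set (c := fun m => ip w (P m) (fun x => x ^ (S k)) / ip w (P m) (P m)).
  set (d := fun i => rsum (fun m => c m * mc (A m) m i) (S k)).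
  exists (fun i => - d i).
  set (G := fun x => rsum (fun m => c m * P m x) (S k)).
  assert (Qeq : forall x, monic_poly (fun i => - d i) (S k) x = x ^ (S k) - G x).
  { intros x. unfold monic_poly. unfold Rminus. f_equal.
    transitivity (- rsum (fun i => d i * x ^ i) (S k)).
    { replace (- rsum (fun i => d i * x ^ i) (S k)) with ((-1) * rsum (fun i => d i * x ^ i) (S k)) by ring.
      rewrite <- rsum_scal. apply rsum_ext; intros; ring. }
    f_equal. unfold G, d.
    rewrite (rsum_ext (fun m => c m * P m x) (fun m => rsum (fun i => c m * mc (A m) m i * x ^ i) (S k))).
    - rewrite rsum_exchange. apply rsum_ext. intros i Hi. rewrite rsum_mult_r. auto.
    - intros m Hm. unfold P. rewrite (mp_rsum (A m) m (S k)) by lia. rewrite <- rsum_scal. apply rsum_ext; intros; ring. }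
  assert (HPc : forall m, Cont (P m)) by (intros; apply Cont_monic).
  assert (HGc : Cont G) by (apply (Cont_rsum (fun m x => c m * P m x)); intros; apply Cont_mult; auto using Cont_const).
  assert (Hoff : forall m m', (m <= k)%nat -> (m' <= k)%nat -> m' <> m -> ip w (P m) (P m') = 0).
  { intros m m' H1 H2 H3. destruct (Nat.lt_ge_cases m m').
    - unfold P. apply cross; [auto| apply HA; lia | lia].
    - rewrite ip_sym. unfold P. apply cross; [auto| apply HA; lia | lia]. }
  intros j Hj. rewrite integral_I1.
  2:{ apply Cont_mult; [apply Cont_mult|]; auto using Cont_pow, Cont_monic. }
  apply (span w k A); auto using Cont_monic; try lia.
  intros m Hm. fold (P m). unfold ip.
  rewrite (I1_ext _ (fun x => P m x * x ^ (S k) * w x - P m x * G x * w x)).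
  2:{ intros x. rewrite Qeq. ring. }
  rewrite I1_minus.
  2,3: apply Cont_mult; [apply Cont_mult|]; auto using Cont_pow.
  rewrite (I1_ext (fun x => P m x * G x * w x) (fun x => rsum (fun m' => c m' * (P m x * P m' x * w x)) (S k))).
  2:{ intros x. unfold G. transitivity (rsum (fun m' => c m' * P m' x) (S k) * (P m x * w x)); [ring|].
      rewrite rsum_mult_r. apply rsum_ext; intros; ring. }
  rewrite (I1_rsum (fun m' x => c m' * (P m x * P m' x * w x))).
  2:{ intros; apply Cont_mult; auto using Cont_const. apply Cont_mult; [apply Cont_mult|]; auto. }
  rewrite (rsum_single _ (S k) m); try lia.
  - rewrite I1_scal. 2:{ apply Cont_mult; [apply Cont_mult|]; auto. }
    change (ip w (P m) (fun x => x ^ (S k)) - c m * ip w (P m) (P m) = 0).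
    unfold c. field. apply Rgt_not_eq. apply norm_pos; auto.
  - intros m' Hm' Hne. rewrite I1_scal. 2:{ apply Cont_mult; [apply Cont_mult|]; auto. }
    change (c m' * ip w (P m) (P m') = 0). rewrite Hoff; auto; try lia. ring.
Qed.

Lemma gs_family w k : Cont w -> (forall x, -1 <= x <= 1 -> 0 < w x) ->
  exists A : nat -> nat -> R, forall m, (m <= k)%nat -> is_monic_orth w m (A m).
Proof.
  intros Hw Hp. induction k.
  - exists (fun _ _ => 0). intros m Hm j Hj. lia.
  - destruct IHk as [A HA]. destruct (gs_step w k A Hw Hp HA) as [a Ha].
    exists (fun m => if Nat.eqb m (S k) then a else A m). intros m Hm.
    destruct (Nat.eqb_spec m (S k)). subst; auto. apply HA; lia.
Qed.

Lemma orth_spec w k : Cont w -> (forall x, -1 <= x <= 1 -> 0 < w x) ->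
  is_monic_orth w k (epsilon (inhabits (fun _ => 0)) (is_monic_orth w k)).
Proof.
  intros Hw Hp. apply epsilon_spec. destruct (gs_family w k Hw Hp) as [A HA]. exists (A k). apply HA; lia.
Qed.


Definition K0f (a : R) := 2 * (3 + a ^ 2) / (3 * (1 - a ^ 2) ^ 3).
Definition Kt0f (a : R) := 2 * (1 + a ^ 2) / (1 - a ^ 2) ^ 4.
Definition dK0f (a : R) := 8 * a * (5 + a ^ 2) / (3 * (1 - a ^ 2) ^ 4).

Lemma I1_pw4 a : -1 < a < 1 -> I1 (fun x => / (1 + a * x) ^ 4) = K0f a.
Proof.
  intros Ha. destruct (Req_dec a 0) as [->|Ha0].
  - rewrite (I1_ext _ (fun _ => 1)) by (intros; simpl; field). unfold I1. rewrite RInt_const.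
    unfold K0f. simpl. unfold scal; simpl; unfold mult; simpl. field.
  - unfold I1. apply is_RInt_unique.
    assert (H := is_RInt_derive (fun x => - / (3 * a) * / (1 + a * x) ^ 3) (fun x => / (1 + a * x) ^ 4) (-1) 1).
    replace (K0f a) with (minus ((fun x => - / (3 * a) * / (1 + a * x) ^ 3) 1) ((fun x => - / (3 * a) * / (1 + a * x) ^ 3) (-1))).
    apply H.
    + intros x Hx. rewrite Rmin_left, Rmax_right in Hx by lra. pose proof (pos1 a x Ha Hx).
      assert (1 + a*x <> 0) by lra. auto_derive. repeat apply Rmult_integral_contrapositive_currified; auto; lra.
      field. split; auto.
    + intros x Hx. rewrite Rmin_left, Rmax_right in Hx by lra. apply (Cont_omega a Ha x Hx).
    + unfold minus, plus, opp; simpl. unfold K0f.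
      assert (1 + a <> 0) by lra. assert (1 - a <> 0) by lra. 
      replace (1 + a * -1) with (1 - a) by ring. replace (1 + a * 1) with (1 + a) by ring.
      field. repeat split; auto. replace (1 - a^2) with ((1-a)*(1+a)) by ring.
      apply Rmult_integral_contrapositive; auto.
Qed.

Lemma I1_pw5 a : -1 < a < 1 -> I1 (fun x => / (1 + a * x) ^ 5) = Kt0f a.
Proof.
  intros Ha. destruct (Req_dec a 0) as [->|Ha0].
  - rewrite (I1_ext _ (fun _ => 1)) by (intros; simpl; field). unfold I1. rewrite RInt_const.
    unfold Kt0f. simpl. unfold scal; simpl; unfold mult; simpl. field.
  - unfold I1. apply is_RInt_unique.
    assert (H := is_RInt_derive (fun x => - / (4 * a) * / (1 + a * x) ^ 4) (fun x => / (1 + a * x) ^ 5) (-1) 1).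
    replace (Kt0f a) with (minus ((fun x => - / (4 * a) * / (1 + a * x) ^ 4) 1) ((fun x => - / (4 * a) * / (1 + a * x) ^ 4) (-1))).
    apply H.
    + intros x Hx. rewrite Rmin_left, Rmax_right in Hx by lra. pose proof (pos1 a x Ha Hx).
      assert (1 + a*x <> 0) by lra. auto_derive. repeat apply Rmult_integral_contrapositive_currified; auto; lra.
      field. split; auto.
    + intros x Hx. rewrite Rmin_left, Rmax_right in Hx by lra. apply (Cont_omegat a Ha x Hx).
    + unfold minus, plus, opp; simpl. unfold Kt0f.
      assert (1 + a <> 0) by lra. assert (1 - a <> 0) by lra. 
      replace (1 + a * -1) with (1 - a) by ring. replace (1 + a * 1) with (1 + a) by ring.
      field. repeat split; auto. replace (1 - a^2) with ((1-a)*(1+a)) by ring.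
      apply Rmult_integral_contrapositive; auto.
Qed.

Lemma phi0 a x : phi a 0 x = 1.
Proof. unfold phi, orth_poly, monic_poly. simpl. ring. Qed.
Lemma phit0 a x : phit a 0 x = 1.
Proof. unfold phit, orth_poly, monic_poly. simpl. ring. Qed.

Lemma Kc00 a : -1 < a < 1 -> Kc a 0 0 = K0f a.
Proof.
  intros Ha. unfold Kc. rewrite integral_I1.
  - rewrite <- I1_pw4 by auto. apply I1_ext. intros x. rewrite phi0. unfold omega. simpl. ring.
  - apply Cont_mult; [apply Cont_mult|]. apply Cont_pow. apply Cont_monic. apply Cont_omega; auto.
Qed.

Lemma Kt00 a : -1 < a < 1 -> Kt a 0 0 = Kt0f a.
Proof.
  intros Ha. unfold Kt. rewrite integral_I1.
  - rewrite <- I1_pw5 by auto. apply I1_ext. intros x. rewrite phit0. unfold omegat. simpl. ring.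
  - apply Cont_mult; [apply Cont_mult|]. apply Cont_pow. apply Cont_monic. apply Cont_omegat; auto.
Qed.

Lemma dKc00 alpha : -1 < alpha < 1 -> dderiv (fun a => Kc a 0 0) alpha = dK0f alpha.
Proof.
  intros Ha.
  assert (Hd : derivable_pt_lim (fun a => Kc a 0 0) alpha (dK0f alpha)).
  { apply is_derive_Reals. apply (is_derive_ext_loc K0f).
    - assert (He : 0 < Rmin (1 - alpha) (1 + alpha)) by (apply Rmin_pos; lra).
      exists (mkposreal _ He). intros t Ht. change (Rabs (t - alpha) < Rmin (1 - alpha) (1 + alpha)) in Ht.
      pose proof (Rmin_l (1 - alpha) (1 + alpha)). pose proof (Rmin_r (1 - alpha) (1 + alpha)).
      apply Rabs_def2 in Ht. rewrite Kc00; auto. lra.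
    - unfold K0f, dK0f. assert (1 - alpha ^ 2 <> 0).
      { replace (1 - alpha^2) with ((1-alpha)*(1+alpha)) by ring. apply Rmult_integral_contrapositive; split; lra. }
      assert (H2 : 1 + - (alpha * (alpha * 1)) = 1 - alpha^2) by ring.
      auto_derive; rewrite !H2.
      repeat apply Rmult_integral_contrapositive_currified; auto; lra.
      field. auto. }
  unfold dderiv. apply (uniqueness_limite (fun a => Kc a 0 0) alpha).
  - apply epsilon_spec. exists (dK0f alpha). auto.
  - auto.
Qed.


Module MCpart.
Import all_boot all_algebra Rstruct.
Import GRing.Theory.

Lemma sumE (F : nat -> R) k : (\sum_(i < k) F i)%R = rsum F k.
Proof.
  elim: k => [|k IH]; first by rewrite big_ord0.
  by rewrite big_ord_recr /= IH.
Qed.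

Lemma inv_exists_mc (m : nat) (D E : nat -> nat -> R) :
  (forall i j, lt i (S m) -> lt j (S m) -> lt i j -> rsum (fun k => D i k * E k j) (S m) = 0) ->
  (forall i, lt i (S m) -> rsum (fun k => D i k * E k i) (S m) <> 0) ->
  (forall i j, lt i (S m) -> lt j (S m) -> lt j i -> E i j = 0) ->
  (forall i, lt i (S m) -> E i i = 1) ->
  exists B, is_inverse (S m) D B.
Proof.
  Local Open Scope ring_scope.
  move=> H1 H2 H3 H4.
  pose Dm : 'M[R]_(m.+1) := \matrix_(i, j) D i j.
  pose Em : 'M[R]_(m.+1) := \matrix_(i, j) E i j.
  have HP : forall i j : 'I_(m.+1), (Dm *m Em) i j = rsum (fun k => D i k * E k j) (S m).
    by move=> i j; rewrite !mxE -sumE; apply: eq_bigr => k _; rewrite !mxE.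
  have Htrig : is_trig_mx (Dm *m Em).
    apply/is_trig_mxP => i j Hij. rewrite HP. apply: H1; apply/ltP => //.
  have HtrigE : is_trig_mx Em^T.
    apply/is_trig_mxP => i j Hij. rewrite !mxE. apply: H3; apply/ltP => //.
  have detE : \det Em = 1%R.
    rewrite -det_tr det_trig //. rewrite big1 // => i _. rewrite !mxE. apply: H4. apply/ltP => //.
  have detP : \det (Dm *m Em) != 0%R.
    rewrite det_trig //. rewrite prodf_seq_neq0. apply/allP => i _ /=. rewrite HP.
    apply/eqP. apply: H2. apply/ltP => //.
  have detD : \det Dm != 0%R.
    move: detP. rewrite det_mulmx detE mulr1 //.
  have HU : Dm \in unitmx by rewrite unitmxE unitfE.
  exists (fun i j => invmx Dm (inord i) (inord j)).
  move=> i j /ltP Hi /ltP Hj. split.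
  - rewrite /mmul -sumE.
    have -> : (\sum_(i0 < m.+1) D i i0 * invmx Dm (inord i0) (inord j))%R = (Dm *m invmx Dm) (inord i) (inord j).
      rewrite mxE. apply: eq_bigr => k _. rewrite !mxE inord_val inordK //.
    rewrite mulmxV // mxE /idm. 
    case: (Nat.eqb_spec i j) => [->|Hne]; first by rewrite eqxx.
    have : (@inord m i != inord j). 
      apply/negP => /eqP Heq. apply: Hne. by rewrite -(@inordK m i) // -(@inordK m j) // Heq.
    by move/negbTE => ->.
  - rewrite /mmul -sumE.
    have -> : (\sum_(i0 < m.+1) invmx Dm (inord i) (inord i0) * D i0 j)%R = (invmx Dm *m Dm) (inord i) (inord j).
      rewrite mxE. apply: eq_bigr => k _. rewrite !mxE inord_val inordK //.
    rewrite mulVmx // mxE /idm. 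
    case: (Nat.eqb_spec i j) => [->|Hne]; first by rewrite eqxx.
    have : (@inord m i != inord j). 
      apply/negP => /eqP Heq. apply: Hne. by rewrite -(@inordK m i) // -(@inordK m j) // Heq.
    by move/negbTE => ->.
Qed.
End MCpart.



Lemma omega_pos alpha x : -1 < alpha < 1 -> -1 <= x <= 1 -> 0 < omega alpha x.
Proof. intros. unfold omega. apply Rinv_0_lt_compat, pow_lt, pos1; auto. Qed.
Lemma omegat_pos alpha x : -1 < alpha < 1 -> -1 <= x <= 1 -> 0 < omegat alpha x.
Proof. intros. unfold omegat. apply Rinv_0_lt_compat, pow_lt, pos1; auto. Qed.

Lemma Kc_diag alpha k : -1 < alpha < 1 -> Kc alpha k k = ip (omega alpha) (phi alpha k) (phi alpha k).
Proof. intros Ha. unfold Kc, phi, orth_poly. apply diag_eq. apply Cont_omega; auto.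
  apply orth_spec. apply Cont_omega; auto. intros; apply omega_pos; auto. Qed.
Lemma Kt_diag alpha k : -1 < alpha < 1 -> Kt alpha k k = ip (omegat alpha) (phit alpha k) (phit alpha k).
Proof. intros Ha. unfold Kt, phit, orth_poly. apply diag_eq. apply Cont_omegat; auto.
  apply orth_spec. apply Cont_omegat; auto. intros; apply omegat_pos; auto. Qed.
Lemma Kc_pos alpha k : -1 < alpha < 1 -> 0 < Kc alpha k k.
Proof. intros Ha. rewrite Kc_diag; auto. unfold phi, orth_poly. apply norm_pos. apply Cont_omega; auto.
  intros; apply omega_pos; auto. Qed.
Lemma Kt_pos alpha k : -1 < alpha < 1 -> 0 < Kt alpha k k.
Proof. intros Ha. rewrite Kt_diag; auto. unfold phit, orth_poly. apply norm_pos. apply Cont_omegat; auto.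
  intros; apply omegat_pos; auto. Qed.
Lemma beta_pos alpha k : -1 < alpha < 1 -> 0 < beta alpha k.
Proof. intros Ha. unfold beta. apply Rdiv_lt_0_compat; [apply Kc_pos|apply Kt_pos]; auto. Qed.

Lemma phit_orth alpha k l : -1 < alpha < 1 -> (k < l)%nat -> ip (omegat alpha) (phit alpha k) (phit alpha l) = 0.
Proof. intros Ha Hkl. unfold phit at 2, orth_poly. unfold phit, orth_poly. apply cross; auto. apply Cont_omegat; auto.
  apply orth_spec. apply Cont_omegat; auto. intros; apply omegat_pos; auto. Qed.

Ltac dsimp := repeat match goal with
  | |- context [Nat.eqb ?a ?b] => destruct (Nat.eqb_spec a b)
  | |- context [Nat.leb ?a ?b] => destruct (Nat.leb_spec a b)
  end; simpl; try lia.

Lemma Dt_upper alpha f i j : (i < j)%nat -> j <> 1%nat -> Dt alpha f i j = 0.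
Proof. intros H1 H2. unfold Dt. dsimp; try reflexivity. Qed.

Lemma Dt_diag alpha f i : (2 <= i)%nat -> Dt alpha f i i = beta alpha i.
Proof. intros H. unfold Dt. dsimp; reflexivity. Qed.

Definition Ecol (t : R) (k j : nat) : R :=
  (if Nat.eqb k j then 1 else 0) + (if andb (Nat.eqb k 0) (Nat.eqb j 1) then t else 0).

Lemma prodE (D : nat -> nat -> R) t n i j : (1 < n)%nat -> (j < n)%nat ->
  rsum (fun k => D i k * Ecol t k j) n = D i j + (if Nat.eqb j 1 then t * D i 0%nat else 0).
Proof.
  intros Hn Hj. unfold Ecol.
  rewrite (rsum_ext _ (fun k => D i k * (if Nat.eqb k j then 1 else 0) + D i k * (if andb (Nat.eqb k 0) (Nat.eqb j 1) then t else 0)))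
    by (intros; ring).
  rewrite rsum_plus. f_equal.
  - rewrite (rsum_single _ n j); auto. rewrite Nat.eqb_refl; ring. intros i0 _ Hne.
    destruct (Nat.eqb_spec i0 j); [lia|ring].
  - destruct (Nat.eqb_spec j 1).
    + rewrite (rsum_single _ n 0); try lia. simpl. ring. intros i0 _ Hne.
      destruct (Nat.eqb_spec i0 0); [lia|simpl; ring].
    + apply rsum_zero. intros. rewrite Bool.andb_false_r. ring.
Qed.

Lemma D_invertible N alpha f : (1 <= N)%nat -> -1 < alpha < 1 -> f 0%nat <> 0 ->
  exists B, is_inverse (S N) (Dt alpha f) B.
Proof.
  intros HN Ha Hf.
  set (t := - Dt alpha f 0 1 / Dt alpha f 0 0).
  assert (Hb0 : Dt alpha f 0 0 = beta alpha 0) by reflexivity.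
  assert (Hb0p := beta_pos alpha 0 Ha).
  apply (MCpart.inv_exists_mc N (Dt alpha f) (Ecol t)).
  - intros i j Hi Hj Hij. rewrite prodE by lia.
    destruct (Nat.eqb_spec j 1).
    + subst. assert (i = 0%nat) by lia. subst. replace (Nat.eqb 1 1) with true by reflexivity. unfold t. rewrite Hb0. field. lra.
    + rewrite Dt_upper by auto. ring.
  - intros i Hi. rewrite prodE by lia.
    destruct (Nat.eqb_spec i 1).
    + subst. unfold t.
      change (-4 * f 0%nat + - (gamma alpha 0 * f 0%nat) / beta alpha 0 * alpha <> 0).
      unfold gamma, beta. rewrite dKc00, Kc00, Kt00 by auto.
      unfold K0f, Kt0f, dK0f.
      assert (H1 : 1 - alpha ^ 2 <> 0).
      { replace (1 - alpha^2) with ((1-alpha)*(1+alpha)) by ring. apply Rmult_integral_contrapositive; split; lra. }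
      assert (H2 : 3 + alpha ^ 2 <> 0) by nra.
      assert (H3 : 1 + alpha ^ 2 <> 0) by nra.
      replace (-4 * f 0%nat + - (/ (2 * (1 + alpha ^ 2) / (1 - alpha ^ 2) ^ 4) * (8 * alpha * (5 + alpha ^ 2) / (3 * (1 - alpha ^ 2) ^ 4)) * f 0%nat) /
         (2 * (3 + alpha ^ 2) / (3 * (1 - alpha ^ 2) ^ 3) / (2 * (1 + alpha ^ 2) / (1 - alpha ^ 2) ^ 4)) * alpha)
        with (- 12 * f 0%nat * (1 + alpha^2) / ((3 + alpha^2) * (1 - alpha^2))).
      2:{ field. repeat split; auto; apply pow_nonzero; auto. }
      unfold Rdiv. apply Rmult_integral_contrapositive_currified.
      * repeat apply Rmult_integral_contrapositive_currified; auto; lra.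
      * apply Rinv_neq_0_compat. apply Rmult_integral_contrapositive_currified; auto.
    + rewrite Rplus_0_r. destruct i as [|[|i]]; [rewrite Hb0; lra|lia|]. rewrite Dt_diag by lia.
      apply Rgt_not_eq, beta_pos; auto.
  - intros i j Hi Hj Hji. unfold Ecol. destruct (Nat.eqb_spec i j); [lia|].
    destruct (Nat.eqb_spec i 0); [lia|]. simpl. ring.
  - intros i Hi. unfold Ecol. rewrite Nat.eqb_refl.
    destruct (Nat.eqb_spec i 0); destruct (Nat.eqb_spec i 1); simpl; try lia; ring.
Qed.


Lemma mvec_mmul n A C u i : mvec n (mmul n A C) u i = mvec n A (mvec n C u) i.
Proof.
  unfold mvec, mmul.
  rewrite (rsum_ext _ (fun j => rsum (fun k => A i k * C k j * u j) n)) by (intros; rewrite rsum_mult_r; auto).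
  rewrite rsum_exchange. apply rsum_ext. intros k _. rewrite <- rsum_scal. apply rsum_ext; intros; ring.
Qed.

Lemma mvec_ext_v n A u u' i : (forall j, (j < n)%nat -> u j = u' j) -> mvec n A u i = mvec n A u' i.
Proof. intros H. unfold mvec. apply rsum_ext. intros; rewrite H; auto. Qed.

Lemma mvec_inv n A B y i : is_inverse n A B -> (i < n)%nat -> mvec n (mmul n A B) y i = y i.
Proof.
  intros H Hi. unfold mvec. rewrite (rsum_single _ n i); auto.
  - rewrite (proj1 (H i i Hi Hi)). unfold idm. rewrite Nat.eqb_refl. ring.
  - intros j Hj Hne. rewrite (proj1 (H i j Hi Hj)). unfold idm. destruct (Nat.eqb_spec i j); [lia|ring].
Qed.

Lemma mvec_inv' n A B y i : is_inverse n A B -> (i < n)%nat -> mvec n (mmul n B A) y i = y i.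
Proof.
  intros H Hi. unfold mvec. rewrite (rsum_single _ n i); auto.
  - rewrite (proj2 (H i i Hi Hi)). unfold idm. rewrite Nat.eqb_refl. ring.
  - intros j Hj Hne. rewrite (proj2 (H i j Hi Hj)). unfold idm. destruct (Nat.eqb_spec i j); [lia|ring].
Qed.

Lemma mvec_lin n A u v p q i : mvec n A (fun j => p * u j + q * v j) i = p * mvec n A u i + q * mvec n A v i.
Proof. unfold mvec. rewrite <- !rsum_scal, <- rsum_plus. apply rsum_ext; intros; ring. Qed.

Lemma mvec_scal_l n A u c i : mvec n A (fun j => c * u j) i = c * mvec n A u i.
Proof. unfold mvec. rewrite <- rsum_scal. apply rsum_ext; intros; ring. Qed.

Lemma bil n X Y (F : nat -> R -> R) h : (forall k, Cont (F k)) -> Cont h ->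
  I1 (fun x => rsum (fun k => X k * F k x) n * rsum (fun l => Y l * F l x) n * h x) =
  rsum (fun k => X k * rsum (fun l => Y l * I1 (fun x => F k x * F l x * h x)) n) n.
Proof.
  intros HF Hh.
  assert (HC : forall k l, Cont (fun x => F k x * F l x * h x)) by (intros; apply Cont_mult; [apply Cont_mult|]; auto).
  rewrite (I1_ext _ (fun x => rsum (fun k => X k * rsum (fun l => Y l * (F k x * F l x * h x)) n) n)).
  2:{ intros x. rewrite 2!rsum_mult_r. apply rsum_ext. intros k _.
      transitivity (X k * (rsum (fun l => Y l * F l x) n * (F k x * h x))); [ring|].
      f_equal. rewrite rsum_mult_r. apply rsum_ext; intros; ring. }
  rewrite (I1_rsum (fun k x => X k * rsum (fun l => Y l * (F k x * F l x * h x)) n)).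
  2:{ intros k _. apply Cont_mult; auto using Cont_const. apply (Cont_rsum (fun l x => Y l * (F k x * F l x * h x))).
      intros; apply Cont_mult; auto using Cont_const. }
  apply rsum_ext. intros k _. rewrite I1_scal.
  2:{ apply (Cont_rsum (fun l x => Y l * (F k x * F l x * h x))). intros; apply Cont_mult; auto using Cont_const. }
  f_equal. rewrite (I1_rsum (fun l x => Y l * (F k x * F l x * h x))).
  2:{ intros; apply Cont_mult; auto using Cont_const. }
  apply rsum_ext. intros l _. apply I1_scal. auto.
Qed.

Lemma Cont_phit alpha k : Cont (phit alpha k).
Proof. apply Cont_monic. Qed.

Definition gq alpha n (X Y : nat -> R) := rsum (fun k => X k * rsum (fun l => Gm alpha k l * Y l) n) n.
Definition pX alpha n (X : nat -> R) (x : R) := rsum (fun k => X k * phit alpha k x) n.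

Lemma Gm_I1 alpha k l : -1 < alpha < 1 ->
  Gm alpha k l = I1 (fun x => phit alpha k x * phit alpha l x * (x * omegat alpha x)).
Proof.
  intros Ha. unfold Gm. rewrite integral_I1.
  - apply I1_ext. intros; ring.
  - apply Cont_mult; [|apply Cont_omegat; auto]. apply Cont_mult; [apply Cont_mult|]; auto using Cont_id, Cont_phit.
Qed.

Lemma gq_I1 alpha n X Y : -1 < alpha < 1 ->
  gq alpha n X Y = I1 (fun x => pX alpha n X x * pX alpha n Y x * (x * omegat alpha x)).
Proof.
  intros Ha. unfold pX. rewrite bil.
  - unfold gq. apply rsum_ext. intros k _. f_equal. apply rsum_ext. intros l _. rewrite Gm_I1; auto. ring.
  - intros; apply Cont_phit.
  - apply Cont_mult; [apply Cont_id|apply Cont_omegat; auto].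
Qed.

Lemma norm_I1 alpha n X : -1 < alpha < 1 ->
  rsum (fun k => Kt alpha k k * (X k * X k)) n = I1 (fun x => pX alpha n X x * pX alpha n X x * omegat alpha x).
Proof.
  intros Ha. unfold pX. rewrite bil.
  - apply rsum_ext. intros k Hk. rewrite (rsum_single _ n k); auto.
    + rewrite Kt_diag; auto. unfold ip. ring.
    + intros l Hl Hne. destruct (Nat.lt_ge_cases k l).
      * change (X l * ip (omegat alpha) (phit alpha k) (phit alpha l) = 0). rewrite phit_orth; auto. ring.
      * change (X l * ip (omegat alpha) (phit alpha k) (phit alpha l) = 0). rewrite ip_sym, phit_orth; auto; try lia. ring.
  - intros; apply Cont_phit.
  - apply Cont_omegat; auto.
Qed.

Lemma gq_bound alpha n X : -1 < alpha < 1 ->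
  Rabs (gq alpha n X X) <= rsum (fun k => Kt alpha k k * (X k * X k)) n.
Proof.
  intros Ha. rewrite gq_I1, norm_I1 by auto.
  assert (Hp : Cont (pX alpha n X)).
  { unfold pX. apply (Cont_rsum (fun k x => X k * phit alpha k x)). intros; apply Cont_mult; auto using Cont_const, Cont_phit. }
  assert (Hw := Cont_omegat alpha Ha).
  assert (C1 : Cont (fun x => pX alpha n X x * pX alpha n X x * (x * omegat alpha x))).
  { apply Cont_mult; [apply Cont_mult|apply Cont_mult]; auto using Cont_id. }
  assert (C2 : Cont (fun x => pX alpha n X x * pX alpha n X x * omegat alpha x)).
  { apply Cont_mult; [apply Cont_mult|]; auto. }
  apply Rabs_le. split.
  - rewrite <- I1_opp by auto. apply I1_le; auto. apply Cont_opp; auto.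
    intros x Hx. pose proof (omegat_pos alpha x Ha Hx). pose proof (Rle_0_sqr (pX alpha n X x)). unfold Rsqr in *.
    assert (0 <= pX alpha n X x * pX alpha n X x * omegat alpha x) by nra. nra.
  - apply I1_le; auto.
    intros x Hx. pose proof (omegat_pos alpha x Ha Hx). pose proof (Rle_0_sqr (pX alpha n X x)). unfold Rsqr in *.
    assert (0 <= pX alpha n X x * pX alpha n X x * omegat alpha x) by nra. nra.
Qed.

Lemma Gm_sym alpha k l : -1 < alpha < 1 -> Gm alpha k l = Gm alpha l k.
Proof. intros Ha. rewrite !Gm_I1 by auto. apply I1_ext; intros; ring. Qed.

Lemma gq_sym alpha n X Y : -1 < alpha < 1 -> gq alpha n X Y = gq alpha n Y X.
Proof.
  intros Ha. unfold gq.
  rewrite (rsum_ext _ (fun k => rsum (fun l => X k * Gm alpha k l * Y l) n)).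
  2:{ intros k _. rewrite <- (rsum_scal (X k) (fun l => Gm alpha k l * Y l) n). apply rsum_ext; intros; ring. }
  rewrite rsum_exchange. apply rsum_ext. intros l _. rewrite <- rsum_scal. apply rsum_ext; intros k _.
  rewrite Gm_sym by auto. ring.
Qed.

Lemma gq_c alpha n c X Y Z (L : nat -> R) p q :
  (forall k, (k < n)%nat -> c * rsum (fun l => Gm alpha k l * Y l) n = L k * (p * Y k + q * Z k)) ->
  c * gq alpha n X Y = p * rsum (fun k => L k * (X k * Y k)) n + q * rsum (fun k => L k * (X k * Z k)) n.
Proof.
  intros H. unfold gq. rewrite <- rsum_scal, <- 2!rsum_scal, <- rsum_plus. apply rsum_ext. intros k Hk.
  transitivity (X k * (c * rsum (fun l => Gm alpha k l * Y l) n)); [ring|]. rewrite H by auto. ring.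
Qed.

Theorem corollary1 (N : nat) (c alpha : R) (f : nat -> R)
  (hN : (1 <= N)%nat) (hc : 0 < c) (halpha : -1 < alpha < 1)
  (hf0 : f 0%nat <> 0) (a b : R) :
  is_eigenvalue (S N) (charmat N c alpha f) a b ->
  b = 0 /\ - c <= a <= c.
Proof.
  intros [u [v [[i0 [Hi0 Hnz]] Heig]]].
  set (n := S N). fold n in Hi0, Heig.
  set (D := Dt alpha f). set (B := minv n D).
  assert (HB : is_inverse n D B).
  { unfold B, minv. apply epsilon_spec. apply D_invertible; auto. }
  set (M := Mt alpha).
  assert (Hch : forall w i, mvec n (charmat N c alpha f) w i = c * mvec n B (mvec n M (mvec n D w)) i).
  { intros w i. transitivity (c * mvec n (mmul n B (mmul n M D)) w i).
    { unfold mvec at 1 2, charmat. rewrite <- rsum_scal. apply rsum_ext; intros. unfold B, M, D, n. ring. }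
    rewrite mvec_mmul. f_equal. apply mvec_ext_v. intros; apply mvec_mmul. }
  set (U := mvec n D u). set (V := mvec n D v).
  assert (Hkey : forall w p q w1 w2, (forall i, (i < n)%nat -> mvec n (charmat N c alpha f) w i = p * w1 i + q * w2 i) ->
     forall k, (k < n)%nat -> c * mvec n M (mvec n D w) k = p * mvec n D w1 k + q * mvec n D w2 k).
  { intros w p q w1 w2 Hw k Hk.
    rewrite <- mvec_lin. rewrite <- (mvec_ext_v _ _ _ _ _ Hw).
    rewrite (mvec_ext_v n D _ (fun i => c * mvec n B (mvec n M (mvec n D w)) i)) by (intros; apply Hch).
    rewrite mvec_scal_l. f_equal. rewrite <- (mvec_mmul n D B). symmetry. apply (mvec_inv n D B); auto. }
  assert (HU : forall k, (k < n)%nat -> c * mvec n M U k = a * U k + (- b) * V k).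
  { apply (Hkey u a (-b) u v). intros i Hi. rewrite (proj1 (Heig i Hi)). ring. }
  assert (HV : forall k, (k < n)%nat -> c * mvec n M V k = b * U k + a * V k).
  { apply (Hkey v b a u v). intros i Hi. rewrite (proj2 (Heig i Hi)). ring. }
  assert (Hnz' : exists k, (k < n)%nat /\ (U k <> 0 \/ V k <> 0)).
  { destruct (classic (exists k, (k < n)%nat /\ (U k <> 0 \/ V k <> 0))) as [H|H]; auto.
    exfalso.
    assert (HZ : forall k, (k < n)%nat -> U k = 0 /\ V k = 0).
    { intros k Hk. destruct (Req_dec (U k) 0); destruct (Req_dec (V k) 0); auto; exfalso; apply H; exists k; auto. }
    assert (Hu : u i0 = 0).
    { rewrite <- (mvec_inv' n D B u i0 HB Hi0). rewrite mvec_mmul. unfold mvec at 1. apply rsum_zero.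
      intros k Hk. fold U. rewrite (proj1 (HZ k Hk)). ring. }
    assert (Hv : v i0 = 0).
    { rewrite <- (mvec_inv' n D B v i0 HB Hi0). rewrite mvec_mmul. unfold mvec at 1. apply rsum_zero.
      intros k Hk. fold V. rewrite (proj2 (HZ k Hk)). ring. }
    destruct Hnz; auto. }
  set (L := fun k => Kt alpha k k).
  assert (HLp : forall k, 0 < L k) by (intros; apply Kt_pos; auto).
  assert (HM : forall W k, mvec n M W k = rsum (fun l => Gm alpha k l * W l) n / L k).
  { intros W k. unfold mvec, M, Mt, Rdiv. rewrite rsum_mult_r. apply rsum_ext; intros; unfold L; ring. }
  assert (R1 : forall k, (k < n)%nat -> c * rsum (fun l => Gm alpha k l * U l) n = L k * (a * U k + (-b) * V k)).
  { intros k Hk. rewrite <- HU by auto. rewrite HM. field. apply Rgt_not_eq, HLp. }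
  assert (R2 : forall k, (k < n)%nat -> c * rsum (fun l => Gm alpha k l * V l) n = L k * (a * V k + b * U k)).
  { intros k Hk. replace (a * V k + b * U k) with (b * U k + a * V k) by ring. rewrite <- HV by auto. rewrite HM. field. apply Rgt_not_eq, HLp. }
  set (SU := rsum (fun k => L k * (U k * U k)) n).
  set (SV := rsum (fun k => L k * (V k * V k)) n).
  set (CR := rsum (fun k => L k * (U k * V k)) n).
  assert (ECR : rsum (fun k => L k * (V k * U k)) n = CR) by (apply rsum_ext; intros; ring).
  assert (E1 := gq_c alpha n c U U V L a (-b) R1). fold SU CR in E1.
  assert (E2 := gq_c alpha n c V U V L a (-b) R1). rewrite ECR in E2. fold SV in E2.
  assert (E3 := gq_c alpha n c V V U L a b R2). rewrite ECR in E3. fold SV in E3.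
  assert (E4 := gq_c alpha n c U V U L a b R2). fold SU CR in E4.
  rewrite (gq_sym alpha n V U halpha) in E2.
  assert (HS : 0 < SU + SV).
  { unfold SU, SV. rewrite <- rsum_plus. destruct Hnz' as [k [Hk Hk']].
    apply (rsum_pos _ n k); auto.
    - intros i _. pose proof (HLp i). pose proof (Rle_0_sqr (U i)). pose proof (Rle_0_sqr (V i)). unfold Rsqr in *. nra.
    - pose proof (HLp k). assert (0 < U k * U k + V k * V k).
      { destruct Hk'. pose proof (Rsqr_pos_lt _ H0). pose proof (Rle_0_sqr (V k)). unfold Rsqr in *. lra.
        pose proof (Rsqr_pos_lt _ H0). pose proof (Rle_0_sqr (U k)). unfold Rsqr in *. lra. }
      nra. }
  assert (Hb : b = 0).
  { assert (b * (SU + SV) = 0) by lra. apply Rmult_integral in H. destruct H; auto. lra. }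
  subst b.
  pose proof (gq_bound alpha n U halpha) as B1. change (Rabs (gq alpha n U U) <= SU) in B1.
  pose proof (gq_bound alpha n V halpha) as B2. change (Rabs (gq alpha n V V) <= SV) in B2.
  apply Rabs_le_between in B1. apply Rabs_le_between in B2.
  assert (Ha1 : a * (SU + SV) = c * gq alpha n U U + c * gq alpha n V V) by lra.
  assert (c * gq alpha n U U <= c * SU) by (apply Rmult_le_compat_l; lra).
  assert (c * - SU <= c * gq alpha n U U) by (apply Rmult_le_compat_l; lra).
  assert (c * gq alpha n V V <= c * SV) by (apply Rmult_le_compat_l; lra).
  assert (c * - SV <= c * gq alpha n V V) by (apply Rmult_le_compat_l; lra).
  split; [reflexivity|]. split.
  - apply (Rmult_le_reg_r (SU + SV)); auto. lra.
  - apply (Rmult_le_reg_r (SU + SV)); auto. lra.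
Qed.
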